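(* Let $\tau>0$, $u_n\in\mathcal V_{[0,1]}$, $X:=\{u\in\mathcal V_{[0,1]}:\mathcal M(u)=\mathcal M(u_n)\}$, and for $\lambda\le1$ let $f_\lambda(u):=(1-\lambda)\|u\|^2_{\mathcal V}-2\langle u,e^{-\tau\Delta}u_n\rangle_{\mathcal V}$. Then $f_\lambda\to f_1$ uniformly on $X$ as $\lambda\uparrow1$. Furthermore, if for each $\lambda$ in a set accumulating at $1$ from below, $u^\lambda\in X$ minimises $f_\lambda$ over $X$, and $u^\lambda\to u$ as $\lambda\uparrow1$, then $u\in X$ and $u$ maximises $\langle v,e^{-\tau\Delta}u_n\rangle_{\mathcal V}$ over $v\in X$.
   Context: $G=(V,E)$ is a finite, simple, connected, undirected graph with weights $\omega_{ij}=\omega_{ji}>0$ for $ij\in E$, $\omega_{ij}=0$ otherwise; $d_i=\sum_j\omega_{ij}$, $r\in[0,1]$ fixed. $\mathcal V$ = functions $V\to\mathbb R$ with $\langle u,v\rangle_{\mathcal V}=\sum_i u_iv_id_i^r$ and norm $\|\cdot\|_{\mathcal V}$; $\mathcal V_{[0,1]}$ = functions $V\to[0,1]$. $(\Delta u)_i=d_i^{-r}\sum_j\omega_{ij}(u_i-u_j)$, $e^{-\tau\Delta}$ its matrix exponential. $\mathbf 1$ all-ones; $\mathcal M(u)=\langle u,\mathbf 1\rangle_{\mathcal V}$. *)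

(* Defs.v *)
From HB Require Import structures.
From mathcomp Require Import all_boot all_order all_algebra.
From mathcomp Require Import all_classical all_reals all_analysis.
Set Implicit Arguments. Unset Strict Implicit. Unset Printing Implicit Defensive.
Import Order.TTheory GRing.Theory Num.Theory.
Import numFieldNormedType.Exports.
Local Open Scope ring_scope.
Local Open Scope classical_set_scope.

Section GraphDefs.
Variables (R : realType) (n : nat).
Implicit Types (w : 'I_n.+1 -> 'I_n.+1 -> R) (u v : 'I_n.+1 -> R).

Definition weighted_graph w : Prop :=
  [/\ forall i j, w i j = w j i,
      forall i j, 0 <= w i j,
      forall i, w i i = 0
    & forall i j, connect [rel a b | w a b != 0] i j].

Definition degree w (i : 'I_n.+1) : R := \sum_j w i j.

Definition inprodV w (r : R) u v : R := \sum_i u i * v i * (degree w i `^ r).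
Definition normV2 w (r : R) u : R := inprodV w r u u.

Definition mass w (r : R) u : R := inprodV w r u (fun _ => 1).

(* Laplacian matrix: (Delta u)_i = d_i^{-r} sum_j w_ij (u_i - u_j) *)
Definition laplacian w (r : R) : 'M[R]_n.+1 :=
  \matrix_(i, j) (degree w i `^ (- r) *
                  ((i == j)%:R * degree w i - w i j)).

Definition expmx (A : 'M[R]_n.+1) : 'M[R]_n.+1 :=
  lim (series (fun k : nat => (k`!%:R)^-1 *: A ^+ k) @ \oo).

Definition applymx (A : 'M[R]_n.+1) u : 'I_n.+1 -> R :=
  fun i => \sum_j A i j * u j.

Definition in01 u : Prop := forall i, 0 <= u i <= 1.

Definition Xset w r un : set ('I_n.+1 -> R) :=
  [set u | in01 u /\ mass w r u = mass w r un].

Definition f_lam w r tau un (lam : R) u : R :=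
  (1 - lam) * normV2 w r u
  - 2 * inprodV w r u (applymx (expmx (- tau *: laplacian w r)) un).

End GraphDefs.

(* Main.v *)
Require Import Defs.
From HB Require Import structures.
From mathcomp Require Import all_boot all_order all_algebra.
From mathcomp Require Import all_classical all_reals all_analysis.
From mathcomp Require Import lra.
Import Order.TTheory GRing.Theory Num.Theory.
Import numFieldNormedType.Exports.
Local Open Scope ring_scope.
Local Open Scope classical_set_scope.

Lemma inprod_close (R : realType) (n : nat) (w : 'I_n.+1 -> 'I_n.+1 -> R) r
  (b u u' : 'I_n.+1 -> R) (eps : R) :
  (forall i, `|u i - u' i| <= eps) ->
  `|inprodV w r u b - inprodV w r u' b| <=
    eps * \sum_i (`|b i| * degree w i `^ r).
Proof.
move=> H; rewrite /inprodV -sumrB mulr_sumr.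
apply: le_trans (ler_norm_sum _ _ _) _.
apply: ler_sum => i _.
rewrite -!mulrA -mulrBl normrM normrM (ger0_norm (powR_ge0 _ _)).
by apply: ler_wpM2r => //; rewrite mulr_ge0 ?normr_ge0 ?powR_ge0.
Qed.

Lemma normV2_bounds (R : realType) (n : nat) (w : 'I_n.+1 -> 'I_n.+1 -> R) r
  (u : 'I_n.+1 -> R) : in01 u ->
  0 <= normV2 w r u <= \sum_i degree w i `^ r.
Proof.
move=> H; apply/andP; split.
  rewrite /normV2 /inprodV; apply: sumr_ge0 => i _.
  by rewrite -expr2 mulr_ge0 ?sqr_ge0 ?powR_ge0.
rewrite /normV2 /inprodV; apply: ler_sum => i _.
have /andP[h0 h1] := H i.
rewrite -[X in _ <= X]mul1r; apply: ler_wpM2r; first exact: powR_ge0.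
by rewrite -expr2 expr_le1.
Qed.

Lemma sumpow_ge0 (R : realType) (n : nat) (w : 'I_n.+1 -> 'I_n.+1 -> R) r :
  0 <= \sum_i degree w i `^ r.
Proof. by apply: sumr_ge0 => i _; exact: powR_ge0. Qed.

Lemma sumK_ge0 (R : realType) (n : nat) (w : 'I_n.+1 -> 'I_n.+1 -> R) r
  (b : 'I_n.+1 -> R) : 0 <= \sum_i (`|b i| * degree w i `^ r).
Proof. by apply: sumr_ge0 => i _; rewrite mulr_ge0 ?normr_ge0 ?powR_ge0. Qed.

Arguments inprod_close {R n} w r b {u u' eps}.
Arguments normV2_bounds {R n} w r {u}.
Arguments sumpow_ge0 {R n} w r.
Arguments sumK_ge0 {R n} w r b.

Theorem theorem30 (R : realType) (n : nat) (w : 'I_n.+1 -> 'I_n.+1 -> R)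
  (r tau : R) (un : 'I_n.+1 -> R) :
  weighted_graph w -> 0 <= r <= 1 -> 0 < tau -> in01 un ->
  (* uniform convergence f_lambda -> f_1 on X as lambda -> 1 from below *)
  (forall eps : R, 0 < eps -> exists2 delta : R, 0 < delta &
     forall lam : R, 1 - delta < lam -> lam <= 1 ->
     forall u, Xset w r un u ->
       `|f_lam w r tau un lam u - f_lam w r tau un 1 u| < eps)
  /\
  (forall (S : set R) (ul : R -> 'I_n.+1 -> R) (u : 'I_n.+1 -> R),
     (forall lam, S lam -> lam < 1) ->
     (forall delta : R, 0 < delta -> exists lam, S lam /\ 1 - delta < lam) ->
     (forall lam, S lam ->
        Xset w r un (ul lam) /\
        forall v, Xset w r un v ->
          f_lam w r tau un lam (ul lam) <= f_lam w r tau un lam v) ->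
     (forall eps : R, 0 < eps -> exists2 delta : R, 0 < delta &
        forall lam, S lam -> 1 - delta < lam ->
        forall i, `|ul lam i - u i| < eps) ->
     Xset w r un u /\
     forall v, Xset w r un v ->
       inprodV w r v (applymx (expmx (- tau *: laplacian w r)) un)
       <= inprodV w r u (applymx (expmx (- tau *: laplacian w r)) un)).
Proof.
move=> _ _ _ _.
set b := applymx _ un.
set C := \sum_i degree w i `^ r.
have C0 : 0 <= C by exact: sumpow_ge0.
split.
  move=> eps eps0; exists (eps / (C + 1)).
    by rewrite divr_gt0 // ltr_wpDl.
  move=> lam hl hl1 u [Hu _].
  have d1 : eps / (C + 1) * (C + 1) = eps by rewrite divfK // gt_eqF // ltr_wpDl.
  have /andP[N0 N1] := normV2_bounds w r Hu.
  rewrite /f_lam subrr mul0r sub0r opprK addrNK.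
  rewrite ger0_norm ?mulr_ge0 ?subr_ge0 //.
  set d := eps / (C + 1) in hl d1 *.
  have t1 : (1 - lam) * normV2 w r u <= (1 - lam) * C.
    by apply: ler_wpM2l; rewrite ?subr_ge0.
  have t2 : (1 - lam) * C <= d * C.
    by apply: ler_wpM2r => //; lra.
  have d0 : 0 < d by rewrite divr_gt0 // ltr_wpDl.
  lra.
move=> S ul u HS Hacc Hmin Hcv.
set K := \sum_i (`|b i| * degree w i `^ r).
have K0 : 0 <= K by exact: sumK_ge0.
have approx : forall eps d0 : R, 0 < eps -> 0 < d0 -> exists lam, S lam /\
    1 - d0 < lam /\ forall i, `|ul lam i - u i| < eps.
  move=> eps d0 e0 dd0; have [d1 d10 Hd1] := Hcv eps e0.
  have [lam [Sl Hl]] := Hacc (Num.min d0 d1) ltac:(by rewrite lt_min dd0 d10).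
  exists lam; split => //; split.
    by apply: le_lt_trans Hl; rewrite lerD2l lerN2 ge_min lexx.
  apply: Hd1 => //; apply: le_lt_trans Hl; rewrite lerD2l lerN2 ge_min lexx orbT //.
have Hin : in01 u.
  move=> i; apply/andP; split.
    rewrite leNgt; apply/negP => hneg.
    have [lam [Sl [_ Hl]]] := approx (- u i) 1 ltac:(lra) ltr01.
    have [[H01 _] _] := Hmin lam Sl.
    have /andP[a _] := H01 i.
    have := Hl i; rewrite ltr_norml; lra.
  rewrite leNgt; apply/negP => hneg.
  have [lam [Sl [_ Hl]]] := approx (u i - 1) 1 ltac:(lra) ltr01.
  have [[H01 _] _] := Hmin lam Sl.
  have /andP[_ a] := H01 i.
  have := Hl i; rewrite ltr_norml; lra.
have Hmass : mass w r u = mass w r un.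
  set K1 := \sum_i (`|(fun _ : 'I_n.+1 => (1:R)) i| * degree w i `^ r).
  have K10 : 0 <= K1 by exact: sumK_ge0.
  apply/eqP; rewrite -subr_eq0 -normr_eq0; apply/eqP.
  apply/le_anti; rewrite normr_ge0 andbT; apply/ler_addgt0Pr => e e0.
  rewrite add0r.
  have [lam [Sl [_ Hl]]] := approx (e / (K1 + 1)) 1
    ltac:(by rewrite divr_gt0 // ltr_wpDl) ltr01.
  have [[_ Hm] _] := Hmin lam Sl.
  have := inprod_close w r (fun _ => 1) (fun i => ltW (Hl i)).
  rewrite -/K1 => h.
  have d1 : e / (K1 + 1) * (K1 + 1) = e by rewrite divfK // gt_eqF // ltr_wpDl.
  have d0 : 0 < e / (K1 + 1) by rewrite divr_gt0 // ltr_wpDl.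
  rewrite /mass in Hm h *; rewrite -Hm distrC.
  set d := e / (K1 + 1) in h d1 d0.
  lra.
split; first by [].
move=> v Xv; have [Hv _] := Xv.
apply/ler_addgt0Pr => e e0.
have dK0 : 0 < (e/4) / (K + 1) by rewrite divr_gt0 ?ltr_wpDl //; lra.
have dC0 : 0 < (e/4) / (C + 1) by rewrite divr_gt0 ?ltr_wpDl //; lra.
have dK : (e/4) / (K + 1) * (K + 1) = e/4 by rewrite divfK // gt_eqF // ltr_wpDl.
have dC : (e/4) / (C + 1) * (C + 1) = e/4 by rewrite divfK // gt_eqF // ltr_wpDl.
set d1 := (e/4) / (K + 1) in dK0 dK *.
set d2 := (e/4) / (C + 1) in dC0 dC *.
have [lam [Sl [Hlam Hl]]] := approx d1 d2 dK0 dC0.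
have [[Hul _] Hm] := Hmin lam Sl.
have := Hm v Xv => hf.
rewrite /f_lam -/b in hf.
have := inprod_close w r b (fun i => ltW (Hl i)); rewrite -/K => h.


have /andP[Nv0 Nv1] := normV2_bounds w r Hv.
have /andP[Nu0 Nu1] := normV2_bounds w r Hul.
have lam1 := HS lam Sl.
have t1 : (1 - lam) * normV2 w r v <= (1 - lam) * C.
  by apply: ler_wpM2l => //; rewrite subr_ge0 (ltW lam1).
have t0 : 0 <= (1 - lam) * normV2 w r (ul lam).
  by rewrite mulr_ge0 // subr_ge0 (ltW lam1).
have t2 : (1 - lam) * C <= d2 * C.
  by apply: ler_wpM2r => //; lra.
have t3 : d1 * K <= e/4.
  lra.
move: h; rewrite ler_norml => /andP[h1 h2].
lra.
Qed.
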